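(* Let $G=(V,E)$ be a graph whose vertex set $V$ is a discrete subset of $\mathbb{R}^n$ and such that every vertex has finite degree. Then $\bar\alpha(G)=\limsup_{R\to\infty}\bar\alpha(G_R)$, where $G_R$ is the finite induced subgraph of $G$ on $V_R=V\cap[-R,R]^n$.
   Context: For $A\subset V$, its density in $G$ is $\delta_G(A)=\limsup_{R\to\infty}\frac{|A\cap V_R|}{|V_R|}$ with $V_R=V\cap[-R,R]^n$. For infinite $G$, $\bar\alpha(G)=\sup\{\delta_G(A): A \text{ independent set of } G\}$; for a finite graph $F$ with vertex set $W$, $\bar\alpha(F)=\alpha(F)/|W|$ where $\alpha$ is the independence number. *)

(* Defs.v *)
From HB Require Import structures.
From mathcomp Require Import all_boot all_order all_algebra.
From mathcomp Require Import all_classical all_reals all_analysis.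
From mathcomp Require Import finmap.
Set Implicit Arguments. Unset Strict Implicit. Unset Printing Implicit Defensive.
Import Order.TTheory GRing.Theory Num.Theory.
Local Open Scope classical_set_scope.
Local Open Scope ring_scope.

Section Defs.
Variables (R : realType) (n : nat).
Notation pt := 'rV[R]_n.

Definition card (S : set pt) : R := (#|` fset_set S|)%fset%:R.

Definition box_part (V : set pt) (r : R) : set pt :=
  V `&` [set x | forall i : 'I_n, `|x ord0 i| <= r].

Definition independent (V : set pt) (E : pt -> pt -> Prop) (A : set pt) : Prop :=
  A `<=` V /\ (forall u v, A u -> A v -> ~ E u v).

Definition limsup_pinfty (f : R -> \bar R) : \bar R :=
  ereal_inf [set ereal_sup [set f r | r in [set r | M <= r]] | M in [set: R]].

Definition density (V : set pt) (A : set pt) : \bar R :=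
  limsup_pinfty (fun r => (card (A `&` box_part V r) / card (box_part V r))%:E).

Definition alpha_bar (V : set pt) (E : pt -> pt -> Prop) : \bar R :=
  ereal_sup [set density V A | A in independent V E].

Definition alpha_fin (W : set pt) (E : pt -> pt -> Prop) : \bar R :=
  ereal_sup [set (card A)%:E | A in independent W E].

Definition alpha_bar_fin (W : set pt) (E : pt -> pt -> Prop) : \bar R :=
  (alpha_fin W E * ((card W)^-1)%:E)%E.

End Defs.

(* Main.v *)
Require Import Defs.
From HB Require Import structures.
From mathcomp Require Import all_boot all_order all_algebra.
From mathcomp Require Import all_classical all_reals all_analysis.
From mathcomp Require Import finmap ring lra.
Import Order.TTheory GRing.Theory Num.Theory.
Local Open Scope classical_set_scope.
Local Open Scope ring_scope.
Set Implicit Arguments. Unset Strict Implicit.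

Lemma card_le_ (R : realType) (n : nat) (S T : set 'rV[R]_n) :
  finite_set T -> S `<=` T -> Defs.card S <= Defs.card T.
Proof.
move=> fT ST; rewrite /Defs.card ler_nat; apply: fsubset_leq_card.
by rewrite -fset_set_sub //; exact: sub_finite_set fT.
Qed.

Lemma card_U_ (R : realType) (n : nat) (S T : set 'rV[R]_n) :
  finite_set S -> finite_set T -> Defs.card (S `|` T) <= Defs.card S + Defs.card T.
Proof.
move=> fS fT; rewrite /Defs.card fset_setU // -natrD ler_nat.
exact: (leq_card_fsetU _ _).1.
Qed.

Lemma card_ge0_ (R : realType) (n : nat) (S : set 'rV[R]_n) : 0 <= Defs.card S.
Proof. by rewrite /Defs.card ler0n. Qed.

Lemma box_mono_ (R : realType) (n : nat) (V : set 'rV[R]_n) r1 r2 :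
  r1 <= r2 -> box_part V r1 `<=` box_part V r2.
Proof. by move=> h x [Vx Hx]; split=> // i; exact: le_trans (Hx i) h. Qed.

Lemma box_sub_ (R : realType) (n : nat) (V : set 'rV[R]_n) r :
  box_part V r `<=` V.
Proof. by move=> x []. Qed.

Lemma limsup_mono_ (R : realType) (f g : R -> \bar R) :
  (forall r, (f r <= g r)%E) -> (limsup_pinfty f <= limsup_pinfty g)%E.
Proof.
move=> H; rewrite /limsup_pinfty; apply: le_ereal_inf_tmp => _ [M _ <-].
apply: ge_ereal_inf; exists (ereal_sup [set f r | r in [set r | M <= r]]).
  by exists M.
apply: ge_ereal_sup => _ [r hr <-]; apply: le_trans (H r) _.
by apply: ereal_sup_ubound; exists r.
Qed.

Lemma limsup_ge_ (R : realType) (f : R -> \bar R) x :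
  (forall M, exists2 r, M <= r & (x <= f r)%E) -> (x <= limsup_pinfty f)%E.
Proof.
move=> H; apply: le_ereal_inf_tmp => _ [M _ <-].
have [r hr hx] := H M; apply: le_trans hx _.
by apply: ereal_sup_ubound; exists r.
Qed.

Lemma limsup_gt_ (R : realType) (f : R -> \bar R) x :
  (x < limsup_pinfty f)%E -> forall M, exists2 r, M <= r & (x < f r)%E.
Proof.
move=> H M.
have : (x < ereal_sup [set f r | r in [set r | (M <= r)%R]])%E.
  apply: lt_le_trans H _; apply: ge_ereal_inf.
  by exists (ereal_sup [set f r | r in [set r | M <= r]]) => //; exists M.
by move=> /ereal_sup_gt [_ [r hr <-] hx]; exists r.
Qed.

Lemma between_ (R : realType) (a b : \bar R) :
  (a < b)%E -> exists r : R, (a < r%:E)%E /\ (r%:E < b)%E.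
Proof.
case: a => [x| |]; case: b => [y| |] //=.
- by rewrite lte_fin => /midf_lt [h1 h2]; exists ((x + y) / 2); rewrite !lte_fin.
- by move=> _; exists (x + 1); rewrite !lte_fin ltrDl ltr01 ltry.
- by move=> _; exists (y - 1); rewrite !lte_fin ltNyr gtrDl ltrN10.
- by move=> _; exists 0; rewrite ltNyr ltry.
Qed.

Lemma le_by_reals_ (R : realType) (L S : \bar R) :
  (forall c : R, (c%:E < L)%E -> (c%:E <= S)%E) -> (L <= S)%E.
Proof.
move=> H; rewrite leNgt; apply/negP => SL.
have [c [h1 h2]] := between_ SL; have := H c h2; by rewrite leNgt h1.
Qed.

Lemma fin_bounded_ (R : realType) (n : nat) (F : set 'rV[R]_n) :
  finite_set F -> exists M : R, forall x, F x -> forall i, `|x ord0 i| <= M.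
Proof.
move=> fF.
exists (\big[Order.max/0]_(x <- fset_set F) \big[Order.max/0]_(i < n) `|x ord0 i|).
move=> x Fx i.
apply: le_trans (le_bigmax_seq _ x xpredT _ _ _) => //; last first.
  by rewrite in_fset_set //; apply: mem_set.
exact: (le_bigmax _ (fun i => `|x ord0 i|) i).
Qed.

Theorem lemma1 (R : realType) (n : nat) (V : set 'rV[R]_n)
  (E : 'rV[R]_n -> 'rV[R]_n -> Prop)
  (HV_discrete : forall r : R, finite_set (box_part V r))
  (HE_V : forall u v, E u v -> V u /\ V v)
  (HE_sym : forall u v, E u v -> E v u)
  (HE_irr : forall u, ~ E u u)
  (Hdeg : forall v, V v -> finite_set [set w | E v w]) :
  alpha_bar V E =
  limsup_pinfty (fun r => alpha_bar_fin (box_part V r) E).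
Proof.
apply/eqP; rewrite eq_le; apply/andP; split.
  apply: ge_ereal_sup => _ [A [AV Aind] <-].
  apply: limsup_mono_ => r; rewrite /alpha_bar_fin EFinM.
  apply: lee_wpmul2r; first by rewrite lee_fin invr_ge0 card_ge0_.
  apply: ereal_sup_ubound; exists (A `&` box_part V r) => //.
  by split; [exact: subIsetr | move=> u v [Au _] [Av _]; exact: Aind].
apply: le_by_reals_ => c cL.
have dens0 : forall A, (0 <= density V A)%E.
  move=> A; apply: limsup_ge_ => M; exists M => //.
  by rewrite lee_fin divr_ge0 // card_ge0_.
have suff_ : (exists A, independent V E A /\ (c%:E <= density V A)%E) ->
    (c%:E <= alpha_bar V E)%E.
  by move=> [A [hA hc]]; apply: le_trans hc _; apply: ereal_sup_ubound; exists A.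
have [c0|c0] := lerP 0 c; last first.
  apply: suff_; exists set0; split; last by apply: le_trans (dens0 _); rewrite lee_fin ltW.
  by split=> // u v [].
have [c' [cc' c'L]] := between_ cL.
rewrite lte_fin in cc'.
pose N r := Defs.card (box_part V r).
pose f r := alpha_bar_fin (box_part V r) E.
have Nmono : forall r1 r2, r1 <= r2 -> N r1 <= N r2.
  by move=> r1 r2 h; apply: card_le_ => //; exact: box_mono_.
have pick : forall r, (c'%:E < f r)%E -> 0 < N r /\
    exists I, independent (box_part V r) E I /\ c' * N r < Defs.card I.
  move=> r fr.
  have Npos : 0 < N r.
    rewrite lt0r card_ge0_ andbT; apply/negP => /eqP N0.
    move: fr; rewrite /f /alpha_bar_fin (_ : Defs.card (box_part V r) = 0) //.
    rewrite invr0 mule0 lte_fin => h.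
    by have := lt_trans (le_lt_trans c0 cc') h; rewrite ltxx.
  split => //.
  case: (pselect (exists I, independent (box_part V r) E I /\ c' * N r < Defs.card I)) => // nI.
  exfalso.
  have : (f r <= c'%:E)%E.
    rewrite /f /alpha_bar_fin.
    have -> : c'%:E = ((c' * N r)%:E * ((N r)^-1)%:E)%E by rewrite -EFinM mulfK // gt_eqF.
    apply: lee_wpmul2r; first by rewrite lee_fin invr_ge0 ltW.
    apply: ge_ereal_sup => _ [I hI <-]; rewrite lee_fin leNgt; apply/negP => h.
    by apply: nI; exists I.
  by rewrite leNgt fr.
case: (pselect (exists K : R, forall r, N r <= K)) => [[K HK]|unb].
  have [r0 Hr0] : exists r0, forall t, N t <= N r0.
    apply: contrapT => nmax.
    have step : forall r0, exists t, N r0 < N t.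
      move=> r0; apply: contrapT => h; apply: nmax; exists r0 => t.
      rewrite leNgt; apply/negP => ht; apply: h; by exists t.
    have big : forall k : nat, exists r, k%:R <= N r.
      elim=> [|k [r hr]]; first by exists 0; exact: card_ge0_.
      have [t ht] := step r; exists t.
      move: hr ht; rewrite /N /Defs.card !ler_nat ltr_nat => hr ht.
      exact: leq_ltn_trans hr ht.
    have K0 : 0 <= K by apply: le_trans (HK 0); exact: card_ge0_.
    have [r hr] := big (Num.Def.archi_bound K).
    by have := lt_le_trans (archi_boundP K0) (le_trans hr (HK r)); rewrite ltxx.
  have [r hr fr] := limsup_gt_ c'L r0.
  have [Npos [I [[IV Iind] hI]]] := pick r fr.
  apply: suff_; exists I; split.
    split; [exact: subset_trans IV (@box_sub_ _ _ V r) | exact: Iind].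
  apply: limsup_ge_ => M; exists (Order.max M r); first by rewrite le_max lexx.
  have rt : r <= Order.max M r by rewrite le_max lexx orbT.
  rewrite setIidl; last exact: subset_trans IV (box_mono_ rt).
  have Nt := Nmono _ _ rt.
  have Nt2 := le_trans (Hr0 (Order.max M r)) (Nmono _ _ hr).
  rewrite lee_fin ler_pdivlMr; last exact: lt_le_trans Npos Nt.
  apply: le_trans (ltW hI); apply: le_trans (ler_wpM2l c0 Nt2) _.
  by apply: ler_wpM2r; [exact: ltW | exact: ltW].
have unb' : forall K, exists r, K < N r.
  move=> K; apply: contrapT => h; apply: unb; exists K => r.
  rewrite leNgt; apply/negP => hr; apply: h; by exists r.
have Tex : forall r, exists S, r <= S /\
    forall u v, box_part V r u -> E u v -> box_part V S v.
  move=> r.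
  have fin : finite_set (\bigcup_(u in box_part V r) [set w | E u w]).
    by apply: bigcup_finite => // u /box_sub_ Vu; exact: Hdeg.
  have [M HM] := fin_bounded_ fin.
  exists (Order.max r M); split; first by rewrite le_max lexx.
  move=> u v bu Euv; split; first exact: (HE_V _ _ Euv).2.
  move=> i; apply: le_trans (HM v _ i) _; first by exists u.
  by rewrite le_max lexx orbT.
have [Tf HT] := choice Tex.
have Rex : forall s, exists r,
    [/\ s + 1 <= r, (c'%:E < f r)%E & N s < (c' - c) * N r].
  move=> s.
  have [r1 hr1] := unb' (N s / (c' - c)).
  have [r hr fr] := limsup_gt_ c'L (Order.max (s + 1) r1).
  exists r; split => //.
    by apply: le_trans hr; rewrite le_max lexx.
  have r1r : r1 <= r by apply: le_trans hr; rewrite le_max lexx orbT.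
  move: (lt_le_trans hr1 (Nmono _ _ r1r)).
  by rewrite ltr_pdivrMr ?subr_gt0 // mulrC.
have [Rs HR] := choice Rex.
have Iex : forall r, exists I, (c'%:E < f r)%E ->
    independent (box_part V r) E I /\ c' * N r < Defs.card I.
  move=> r; case: (pselect (c'%:E < f r)%E) => h.
    by have [_ [I hI]] := pick r h; exists I.
  by exists set0.
have [If HI] := choice Iex.
pose s k := iter k (fun x => Tf (Rs x)) 0.
have sS : forall k, s k.+1 = Tf (Rs (s k)) by [].
have HRk : forall k, [/\ s k + 1 <= Rs (s k), (c'%:E < f (Rs (s k)))%E
    & N (s k) < (c' - c) * N (Rs (s k))] by move=> k; exact: HR.
have sR : forall k, Rs (s k) <= s k.+1 by move=> k; rewrite sS; exact: (HT _).1.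
have ss1 : forall k, s k <= s k.+1.
  move=> k; have [h _ _] := HRk k; apply: le_trans (sR k).
  by apply: le_trans h; rewrite lerDl ler01.
have smono : forall j k, (j <= k)%N -> s j <= s k.
  move=> j; elim=> [|k IH]; first by rewrite leqn0 => /eqP ->.
  rewrite leq_eqVlt => /orP [/eqP ->//|hj]; exact: le_trans (IH hj) (ss1 k).
have sk : forall k, k%:R <= s k.
  elim=> [|k IH]; first by rewrite /s /= mulr0n.
  have [h _ _] := HRk k; rewrite -natr1; apply: le_trans (sR k); apply: le_trans h.
  by rewrite lerD2r.
pose part k := If (Rs (s k)) `&` ~` box_part V (s k).
pose A := [set x | exists k, part k x].
have HIk : forall k, independent (box_part V (Rs (s k))) E (If (Rs (s k))) /\
    c' * N (Rs (s k)) < Defs.card (If (Rs (s k))).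
  by move=> k; have [_ h _] := HRk k; exact: HI.
have cross : forall j k u v, (j < k)%N -> part j u -> part k v -> ~ E u v.
  move=> j k u v jk [Iu _] [_ nv] Euv; apply: nv.
  have [[IV _] _] := HIk j.
  have := (HT (Rs (s j))).2 u v (IV _ Iu) Euv; rewrite -sS.
  by apply: box_mono_; exact: smono.
apply: suff_; exists A; split.
  split.
    move=> x [k [Ix _]]; have [[IV _] _] := HIk k; exact: box_sub_ (IV _ Ix).
  move=> u v [j pu] [k pv] Euv.
  case: (ltngtP j k) => h.
  - exact: cross h pu pv Euv.
  - exact: cross h pv pu (HE_sym _ _ Euv).
  - by subst k; have [[_ Iind] _] := HIk j; exact: Iind u v pu.1 pv.1 Euv.
apply: limsup_ge_ => M.
have M0 : 0 <= `|M| by [].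
pose k := Num.Def.archi_bound `|M|.
have Mk : M <= s k.
  apply: le_trans (ler_norm M) _; exact: le_trans (ltW (archi_boundP M0)) (sk k).
have [h1 fr h3] := HRk k.
exists (Rs (s k)); first by apply: le_trans Mk (le_trans _ h1); rewrite lerDl ler01.
have [[IV Iind] hI] := HIk k.
have Nr : 0 < N (Rs (s k)).
  by have := le_lt_trans (card_ge0_ _) h3; rewrite pmulr_rgt0 // subr_gt0.
have finAr : finite_set (A `&` box_part V (Rs (s k))).
  exact: sub_finite_set (@subIsetr _ _ _) (HV_discrete _).
have finp : finite_set (part k).
  exact: sub_finite_set (subset_trans (@subIsetl _ _ _) IV) (HV_discrete _).
have c1 : Defs.card (If (Rs (s k))) <= Defs.card (part k) + N (s k).
  apply: le_trans (card_U_ finp (HV_discrete _)).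
  apply: card_le_; first by rewrite finite_setU.
  move=> x Ix; case: (pselect (box_part V (s k) x)) => hx; [right|left] => //.
have c2 : Defs.card (part k) <= Defs.card (A `&` box_part V (Rs (s k))).
  apply: card_le_ => // x px; split; first by exists k.
  exact: IV _ px.1.
rewrite lee_fin ler_pdivlMr //.
rewrite mulrBl in h3.
move: c1 c2 h3 hI.
move: (Defs.card (If (Rs (s k)))) (Defs.card (part k)) (N (s k))
  (Defs.card (A `&` box_part V (Rs (s k)))) (c' * N (Rs (s k))) (c * N (Rs (s k))).
clear; move=> a b d e x y; lra.
Qed.
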